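(* Let $S_\omega$ be the group of all permutations of $\omega$ and let $\mathcal{E}$ be the coarse structure on $\omega$ with base $\{E_H: H\subseteq S_\omega \text{ finite}, \ \mathrm{id}\in H\}$, where $E_H=\{(x,y): y\in Hx\}$. Then $(\omega,\mathcal{E})$ is extremely normal (every infinite subset of $\omega$ is large), $\mathcal{E}$ is strictly contained in $\mathfrak{M}_\omega$, and $(\omega,\mathcal{E})$ is not maximal.
   Context: A ballean $(X,\mathcal{E})$ is a set with a coarse structure. $E[x]=\{y:(x,y)\in E\}$, $E[A]=\bigcup_{a\in A}E[a]$. $Y$ is bounded if $Y\subseteq E[x]$ for some $x$ and $E\in\mathcal{E}$. $A$ is large if $X=E[A]$ for some $E$. An unbounded ballean is extremely normal if every unbounded subset is large, and maximal if $X$ is bounded in every coarse structure strictly containing $\mathcal{E}$. $\mathfrak{M}_\omega$ is the coarse structure on $\omega$ with base $\{M_{\mathcal{P}}:\mathcal{P}\in\mathfrak{F}\}$, where $\mathfrak{F}$ is the family of coverings $\mathcal{P}$ of $\omega$ such that every $P\in\mathcal{P}$ is finite and for every $x\in\omega$ the set $\bigcup\{P'\in\mathcal{P}: x\in P'\}$ is finite, and $M_{\mathcal{P}}=\{(x,y): x,y\in P \text{ for some } P\in\mathcal{P}\}$. *)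

(* Defs.v *)
From Stdlib Require Import List.

Definition entourage (X : Type) := X -> X -> Prop.
Definition family (X : Type) := entourage X -> Prop.

Definition ball {X : Type} (E : entourage X) (x : X) : X -> Prop := fun y => E x y.
Definition ballS {X : Type} (E : entourage X) (A : X -> Prop) : X -> Prop :=
  fun y => exists a, A a /\ E a y.

Definition subrel {X : Type} (E F : entourage X) : Prop := forall x y, E x y -> F x y.

Definition coarse_structure {X : Type} (C : family X) : Prop :=
  C (fun x y => x = y) /\
  (forall E F, C F -> subrel E F -> C E) /\
  (forall E, C E -> C (fun x y => E y x)) /\
  (forall E F, C E -> C F -> C (fun x y => E x y \/ F x y)) /\
  (forall E F, C E -> C F -> C (fun x z => exists y, E x y /\ F y z)).

Definition with_base {X : Type} (B : family X) : family X :=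
  fun E => exists F, B F /\ subrel E F.

Definition bounded {X : Type} (C : family X) (Y : X -> Prop) : Prop :=
  exists x E, C E /\ forall y, Y y -> ball E x y.

Definition large {X : Type} (C : family X) (A : X -> Prop) : Prop :=
  exists E, C E /\ forall y, ballS E A y.

Definition unbounded_ballean {X : Type} (C : family X) : Prop :=
  ~ bounded C (fun _ => True).

Definition extremely_normal {X : Type} (C : family X) : Prop :=
  unbounded_ballean C /\ forall Y, ~ bounded C Y -> large C Y.

Definition strictly_contained {X : Type} (C D : family X) : Prop :=
  (forall E, C E -> D E) /\ exists E, D E /\ ~ C E.

Definition maximal {X : Type} (C : family X) : Prop :=
  unbounded_ballean C /\
  forall D, coarse_structure D -> strictly_contained C D -> bounded D (fun _ => True).

Definition finite_set (A : nat -> Prop) : Prop := exists n, forall x, A x -> x < n.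
Definition infinite_set (A : nat -> Prop) : Prop := ~ finite_set A.

Definition bijective_fun (f : nat -> nat) : Prop :=
  exists g, (forall x, g (f x) = x) /\ (forall y, f (g y) = y).

Definition finite_perm_set (H : (nat -> nat) -> Prop) : Prop :=
  (exists l : list (nat -> nat), forall h, H h <-> In h l) /\
  (forall h, H h -> bijective_fun h) /\
  H (fun x => x).

Definition E_H (H : (nat -> nat) -> Prop) : entourage nat :=
  fun x y => exists h, H h /\ y = h x.

Definition perm_base : family nat :=
  fun E => exists H, finite_perm_set H /\ E = E_H H.

Definition perm_coarse : family nat := with_base perm_base.

Definition in_frakF (P : (nat -> Prop) -> Prop) : Prop :=
  (forall x, exists Q, P Q /\ Q x) /\
  (forall Q, P Q -> finite_set Q) /\
  (forall x, finite_set (fun y => exists Q, P Q /\ Q x /\ Q y)).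

Definition M_P (P : (nat -> Prop) -> Prop) : entourage nat :=
  fun x y => exists Q, P Q /\ Q x /\ Q y.

Definition M_base : family nat :=
  fun E => exists P, in_frakF P /\ E = M_P P.

Definition M_omega : family nat := with_base M_base.

(* Main.v *)
Require Import Defs.
From Stdlib Require Import ClassicalEpsilon Classical List Lia PeanoNat Arith.

Lemma L1 : forall n (F : nat -> nat -> Prop),
  (forall z, z < n -> exists m, forall y, F z y -> y < m) ->
  exists M, forall z y, z < n -> F z y -> y < M.
Proof.
  induction n; intros F HF.
  - exists 0; intros; lia.
  - destruct (IHn F) as [M HM]. { intros; apply HF; lia. }
    destruct (HF n) as [m Hm]; [lia|].
    exists (max M m); intros z y Hz Hy.
    destruct (Nat.eq_dec z n) as [->|Hne].
    + specialize (Hm y Hy); lia.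
    + specialize (HM z y ltac:(lia) Hy); lia.
Qed.

Lemma L2 : forall (l : list (nat -> nat)) x, exists m, forall h, In h l -> h x < m.
Proof.
  induction l as [|a l IH]; intros x.
  - exists 0; intros h [].
  - destruct (IH x) as [m Hm]. exists (max m (S (a x))).
    intros h [<-|Hh]; [lia| specialize (Hm h Hh); lia].
Qed.

Lemma L3 : forall (l : list (nat -> nat)) x, (forall h, In h l -> bijective_fun h) ->
  exists m, forall h z, In h l -> h z = x -> z < m.
Proof.
  induction l as [|a l IH]; intros x Hb.
  - exists 0; intros h z [].
  - destruct (IH x) as [m Hm]. { intros; apply Hb; right; auto. }
    destruct (Hb a (or_introl eq_refl)) as [g [Hg1 Hg2]].
    exists (max m (S (g x))).
    intros h z [<-|Hh] Hz.
    + rewrite <- Hz, Hg1; lia.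
    + specialize (Hm h z Hh Hz); lia.
Qed.

Lemma mk_fps : forall l, In (fun x : nat => x) l -> (forall h, In h l -> bijective_fun h) ->
  finite_perm_set (fun g => In g l).
Proof.
  intros l Hid Hb. split; [exists l; tauto|split; auto].
Qed.

Lemma perm_base_of : forall l, In (fun x : nat => x) l -> (forall h, In h l -> bijective_fun h) ->
  perm_coarse (E_H (fun g => In g l)).
Proof.
  intros l Hid Hb. exists (E_H (fun g => In g l)). split.
  - exists (fun g => In g l); split; auto using mk_fps.
  - intros x y H; exact H.
Qed.

Lemma perm_coarse_inv : forall E, perm_coarse E ->
  exists l, In (fun x : nat => x) l /\ (forall h, In h l -> bijective_fun h) /\ subrel E (E_H (fun g => In g l)).
Proof.
  intros E [F [[H [[[l Hl] [Hb Hid]] ->]] Hs]].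
  exists l. split; [apply Hl, Hid|]. split.
  - intros h Hh; apply Hb, Hl, Hh.
  - intros x y Hxy. destruct (Hs x y Hxy) as [h [Hh ->]].
    exists h; split; [apply Hl, Hh|reflexivity].
Qed.

Lemma perm_unbounded : unbounded_ballean perm_coarse.
Proof.
  intros [x [E [HE Hall]]].
  destruct (perm_coarse_inv E HE) as [l [_ [_ Hs]]].
  destruct (L2 l x) as [m Hm].
  destruct (Hs x m (Hall m I)) as [h [Hh Heq]].
  specialize (Hm h Hh). lia.
Qed.

Definition inv (h : nat -> nat) : nat -> nat :=
  epsilon (inhabits (fun x : nat => x))
    (fun g => (forall x, g (h x) = x) /\ forall y, h (g y) = y).

Lemma inv_spec : forall h, bijective_fun h ->
  (forall x, inv h (h x) = x) /\ forall y, h (inv h y) = y.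
Proof. intros h Hb. unfold inv. apply epsilon_spec. exact Hb. Qed.

Lemma comp_bij : forall f g, bijective_fun f -> bijective_fun g ->
  bijective_fun (fun x => g (f x)).
Proof.
  intros f g [f' [F1 F2]] [g' [G1 G2]].
  exists (fun y => f' (g' y)); split; intros; [rewrite G1, F1|rewrite F2, G2]; auto.
Qed.

Lemma perm_cs : coarse_structure perm_coarse.
Proof.
  split; [|split; [|split; [|split]]].
  - exists (E_H (fun g => In g ((fun x : nat => x) :: nil))). split.
    + exists (fun g => In g ((fun x : nat => x) :: nil)); split; [|reflexivity].
      apply mk_fps; [left; reflexivity|].
      intros h [<-|[]]. exists (fun x => x); split; auto.
    + intros x y ->. exists (fun x => x); split; [left|]; reflexivity.
  - intros E F [G [HG Hs]] Hsub. exists G; split; auto.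
    intros x y H; apply Hs, Hsub, H.
  - intros E HE. destruct (perm_coarse_inv E HE) as [l [_ [Hb Hs]]].
    set (l' := (fun x : nat => x) :: map inv l).
    assert (Hb' : forall h, In h l' -> bijective_fun h).
    { intros h [<-|Hh].
      - exists (fun x => x); split; auto.
      - apply in_map_iff in Hh as [g [<- Hg]].
        destruct (inv_spec g (Hb g Hg)) as [A B].
        exists g; split; auto. }
    destruct (perm_base_of l' (or_introl eq_refl) Hb') as [F [HF Hs']].
    exists F; split; auto. intros x y Hxy. apply Hs'.
    destruct (Hs y x Hxy) as [h [Hh ->]].
    exists (inv h); split.
    + right; apply in_map; exact Hh.
    + symmetry; apply (inv_spec h (Hb h Hh)).
  - intros E F HE HF.
    destruct (perm_coarse_inv E HE) as [l1 [I1 [Hb1 Hs1]]].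
    destruct (perm_coarse_inv F HF) as [l2 [I2 [Hb2 Hs2]]].
    destruct (perm_base_of (l1 ++ l2)) as [G [HG Hs]].
    + apply in_or_app; left; exact I1.
    + intros h Hh; apply in_app_or in Hh as [Hh|Hh]; auto.
    + exists G; split; auto. intros x y [Hxy|Hxy]; apply Hs.
      * destruct (Hs1 x y Hxy) as [h [Hh ->]]. exists h; split; auto; apply in_or_app; auto.
      * destruct (Hs2 x y Hxy) as [h [Hh ->]]. exists h; split; auto; apply in_or_app; auto.
  - intros E F HE HF.
    destruct (perm_coarse_inv E HE) as [l1 [I1 [Hb1 Hs1]]].
    destruct (perm_coarse_inv F HF) as [l2 [I2 [Hb2 Hs2]]].
    set (l := flat_map (fun h1 => map (fun h2 => fun x : nat => h2 (h1 x)) l2) l1).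
    assert (Hin : forall h1 h2, In h1 l1 -> In h2 l2 -> In (fun x => h2 (h1 x)) l).
    { intros h1 h2 H1 H2. apply in_flat_map. exists h1; split; auto.
      apply (in_map (fun h2 => fun x : nat => h2 (h1 x))); auto. }
    destruct (perm_base_of l) as [G [HG Hs]].
    + exact (Hin _ _ I1 I2).
    + intros h Hh. apply in_flat_map in Hh as [h1 [H1 Hh]].
      apply in_map_iff in Hh as [h2 [<- H2]]. apply comp_bij; auto.
    + exists G; split; auto. intros x z [y [Hxy Hyz]]. apply Hs.
      destruct (Hs1 x y Hxy) as [h1 [H1 ->]].
      destruct (Hs2 _ z Hyz) as [h2 [H2 ->]].
      exists (fun x => h2 (h1 x)); split; auto.
Qed.

Section Large.
Variable A : nat -> Prop.
Hypothesis HA : forall n, exists a, A a /\ n <= a.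

Definition pick (n : nat) : nat := epsilon (inhabits 0) (fun a => A a /\ n <= a).
Lemma pick_spec : forall n, A (pick n) /\ n <= pick n.
Proof. intro n. unfold pick. apply epsilon_spec, HA. Qed.

Fixpoint psi (k : nat) : nat :=
  match k with 0 => pick 0 | S k => pick (S (psi k)) end.

Lemma psi_A : forall k, A (psi k).
Proof. destruct k; apply pick_spec. Qed.

Lemma psi_mono : forall i j, i < j -> psi i < psi j.
Proof.
  intros i j Hij. induction Hij.
  - simpl. pose proof (pick_spec (S (psi i))). lia.
  - simpl. pose proof (pick_spec (S (psi m))). lia.
Qed.

Lemma psi_inj : forall i j, psi i = psi j -> i = j.
Proof.
  intros i j H. destruct (lt_eq_lt_dec i j) as [[H1|H1]|H1]; auto;
  apply psi_mono in H1; lia.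
Qed.

Definition hsw (x : nat) : nat :=
  if excluded_middle_informative (A x) then
    (if excluded_middle_informative (exists n, ~ A n /\ psi n = x)
     then epsilon (inhabits 0) (fun n => ~ A n /\ psi n = x) else x)
  else psi x.

Lemma hsw_inv : forall x, hsw (hsw x) = x.
Proof.
  intro x. unfold hsw at 2.
  destruct (excluded_middle_informative (A x)) as [Ax|nAx].
  - destruct (excluded_middle_informative (exists n, ~ A n /\ psi n = x)) as [Ex|nEx].
    + pose proof (epsilon_spec (inhabits 0) _ Ex) as [Hn Hp].
      set (n := epsilon (inhabits 0) (fun n => ~ A n /\ psi n = x)) in *.
      unfold hsw. destruct (excluded_middle_informative (A n)); [contradiction|auto].
    + unfold hsw. destruct (excluded_middle_informative (A x)); [|contradiction].
      destruct (excluded_middle_informative (exists n, ~ A n /\ psi n = x)); [contradiction|auto].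
  - unfold hsw. destruct (excluded_middle_informative (A (psi x))) as [_|C]; [|exfalso; apply C, psi_A].
    destruct (excluded_middle_informative (exists n, ~ A n /\ psi n = psi x)) as [Ex|nEx].
    + pose proof (epsilon_spec (inhabits 0) _ Ex) as [Hn Hp]. apply psi_inj in Hp; auto.
    + exfalso; apply nEx; exists x; auto.
Qed.

Lemma large_A : large perm_coarse A.
Proof.
  exists (E_H (fun g => In g ((fun x : nat => x) :: hsw :: nil))). split.
  - apply perm_base_of; [left; reflexivity|].
    intros h [<-|[<-|[]]]; [exists (fun x => x); split; auto|].
    exists hsw; split; apply hsw_inv.
  - intro y. destruct (classic (A y)) as [Ay|nAy].
    + exists y; split; auto. exists (fun x => x); split; [left|]; reflexivity.
    + exists (psi y); split; [apply psi_A|].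
      exists hsw; split; [right; left; reflexivity|].
      unfold hsw. destruct (excluded_middle_informative (A (psi y))) as [_|C]; [|exfalso; apply C, psi_A].
      destruct (excluded_middle_informative (exists n, ~ A n /\ psi n = psi y)) as [Ex|nEx].
      * pose proof (epsilon_spec (inhabits 0) _ Ex) as [Hn Hp]. apply psi_inj in Hp; auto.
      * exfalso; apply nEx; exists y; auto.
Qed.
End Large.

Lemma infinite_large : forall A, infinite_set A -> large perm_coarse A.
Proof.
  intros A HA. apply large_A. intro n.
  apply NNPP; intro C. apply HA. exists n. intros x Ax.
  destruct (le_lt_dec n x); auto. exfalso; apply C; exists x; auto.
Qed.

Definition swap0 (k : nat) : nat -> nat :=
  fun z => if Nat.eqb z 0 then k else if Nat.eqb z k then 0 else z.

Lemma swap0_inv : forall k z, swap0 k (swap0 k z) = z.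
Proof.
  intros k z. unfold swap0.
  destruct (Nat.eqb_spec z 0) as [->|H0].
  - destruct (Nat.eqb_spec k 0) as [->|Hk]; [reflexivity|].
    rewrite Nat.eqb_refl; reflexivity.
  - destruct (Nat.eqb_spec z k) as [->|Hk].
    + simpl. reflexivity.
    + apply Nat.eqb_neq in H0, Hk. rewrite H0, Hk. reflexivity.
Qed.

Lemma finite_bounded : forall Y, finite_set Y -> bounded perm_coarse Y.
Proof.
  intros Y [n Hn]. exists 0, (E_H (fun g => In g ((fun x : nat => x) :: map swap0 (seq 0 n)))).
  split.
  - apply perm_base_of; [left; reflexivity|].
    intros h [<-|Hh]; [exists (fun x => x); split; auto|].
    apply in_map_iff in Hh as [k [<- _]]. exists (swap0 k); split; apply swap0_inv.
  - intros y Hy. exists (swap0 y); split.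
    + right. apply in_map, in_seq. specialize (Hn y Hy); lia.
    + reflexivity.
Qed.

Lemma perm_en : extremely_normal perm_coarse.
Proof.
  split; [exact perm_unbounded|].
  intros Y HY. apply infinite_large. intro F. apply HY, finite_bounded, F.
Qed.

Lemma perm_sub_M : forall E, perm_coarse E -> M_omega E.
Proof.
  intros E HE. destruct (perm_coarse_inv E HE) as [l [I [Hb Hs]]].
  set (Qz := fun z y => y = z \/ exists h, In h l /\ y = h z).
  set (P := fun Q : nat -> Prop => exists z, Q = Qz z).
  assert (Qfin : forall z, exists m, forall y, Qz z y -> y < m).
  { intro z. destruct (L2 l z) as [m Hm]. exists (max (S z) m).
    intros y [->|[h [Hh ->]]]; [lia| specialize (Hm h Hh); lia]. }
  exists (M_P P). split.
  - exists P; split; [|reflexivity]. split; [|split].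
    + intro x. exists (Qz x); split; [exists x; reflexivity| left; reflexivity].
    + intros Q [z ->]. apply Qfin.
    + intro x. destruct (L3 l x Hb) as [m3 Hm3].
      destruct (L1 (max (S x) m3) Qz) as [M HM]. { intros; apply Qfin. }
      exists M. intros y [Q [[z ->] [Hx Hy]]].
      apply (HM z y); auto.
      destruct Hx as [->|[h [Hh Hx]]]; [lia|].
      specialize (Hm3 h z Hh (eq_sym Hx)); lia.
  - intros x y Hxy. destruct (Hs x y Hxy) as [h [Hh ->]].
    exists (Qz x); split; [exists x; reflexivity|].
    split; [left; reflexivity| right; exists h; auto].
Qed.

Definition E0 : entourage nat := fun x y => Nat.log2 (S x) = Nat.log2 (S y).

Lemma log_bound : forall y, y < 2 ^ S (Nat.log2 (S y)).
Proof. intro y. pose proof (Nat.log2_spec (S y) ltac:(lia)). lia. Qed.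

Lemma E0_M : M_omega E0.
Proof.
  set (P := fun Q : nat -> Prop => exists k, Q = fun y => Nat.log2 (S y) = k).
  exists (M_P P). split.
  - exists P; split; [|reflexivity]. split; [|split].
    + intro x. exists (fun y => Nat.log2 (S y) = Nat.log2 (S x)); split; [eexists; reflexivity|reflexivity].
    + intros Q [k ->]. exists (2 ^ S k). intros y <-. apply log_bound.
    + intro x. exists (2 ^ S (Nat.log2 (S x))). intros y [Q [[k ->] [Hx Hy]]].
      rewrite Hx, <- Hy. apply log_bound.
  - intros x y Hxy. exists (fun y => Nat.log2 (S y) = Nat.log2 (S x)).
    split; [eexists; reflexivity|]. split; [reflexivity|symmetry; exact Hxy].
Qed.

Lemma E0_not_perm : ~ perm_coarse E0.
Proof.
  intro HE. destruct (perm_coarse_inv E0 HE) as [l [_ [_ Hs]]].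
  set (m := length l). set (x := 2 ^ m - 1).
  assert (Hm : m < 2 ^ m) by (apply Nat.pow_gt_lin_r; lia).
  assert (Hinc : incl (seq x (S m)) (map (fun h => h x) l)).
  { intros y Hy. apply in_seq in Hy.
    assert (E0 x y).
    { unfold E0. unfold x. replace (S (2 ^ m - 1)) with (2 ^ m) by lia.
      rewrite Nat.log2_pow2 by lia. symmetry. apply Nat.log2_unique; [lia|].
      simpl. unfold x in Hy. lia. }
    destruct (Hs x y H) as [h [Hh ->]]. apply (in_map (fun h => h x)); auto. }
  pose proof (NoDup_incl_length (seq_NoDup (S m) x) Hinc) as HL.
  rewrite length_seq, length_map in HL. unfold m in HL. lia.
Qed.

Definition Dfin : family nat := fun E =>
  (forall x, finite_set (E x)) /\ (forall x, finite_set (fun y => E y x)).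

Lemma Dfin_cs : coarse_structure Dfin.
Proof.
  split; [|split; [|split; [|split]]].
  - split; intro x; exists (S x); intros y H; lia.
  - intros E F [H1 H2] Hs. split; intro x.
    + destruct (H1 x) as [n Hn]; exists n; intros y Hy; apply Hn, Hs, Hy.
    + destruct (H2 x) as [n Hn]; exists n; intros y Hy; apply Hn, Hs, Hy.
  - intros E [H1 H2]; split; auto.
  - intros E F [H1 H2] [G1 G2]; split; intro x.
    + destruct (H1 x) as [n Hn], (G1 x) as [m Hm]; exists (max n m).
      intros y [Hy|Hy]; [specialize (Hn y Hy)|specialize (Hm y Hy)]; lia.
    + destruct (H2 x) as [n Hn], (G2 x) as [m Hm]; exists (max n m).
      intros y [Hy|Hy]; [specialize (Hn y Hy)|specialize (Hm y Hy)]; lia.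
  - intros E F [H1 H2] [G1 G2]; split; intro x.
    + destruct (H1 x) as [n Hn].
      destruct (L1 n F) as [M HM]. { intros z _; apply G1. }
      exists M. intros z [y [Hxy Hyz]]. apply (HM y z); auto.
    + destruct (G2 x) as [n Hn].
      destruct (L1 n (fun y z => E z y)) as [M HM]. { intros z _; apply H2. }
      exists M. intros z [y [Hzy Hyx]]. apply (HM y z); auto.
Qed.

Lemma perm_sub_D : forall E, perm_coarse E -> Dfin E.
Proof.
  intros E HE. destruct (perm_coarse_inv E HE) as [l [_ [Hb Hs]]]. split; intro x.
  - destruct (L2 l x) as [m Hm]. exists m. intros y Hy.
    destruct (Hs x y Hy) as [h [Hh ->]]. auto.
  - destruct (L3 l x Hb) as [m Hm]. exists m. intros y Hy.
    destruct (Hs y x Hy) as [h [Hh Heq]]. apply (Hm h); auto.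
Qed.

Lemma E0_D : Dfin E0.
Proof.
  split; intro x; exists (2 ^ S (Nat.log2 (S x))); intros y Hy; unfold E0 in Hy;
  [rewrite Hy| rewrite <- Hy]; apply log_bound.
Qed.

Lemma not_max : ~ maximal perm_coarse.
Proof.
  intros [_ Hm]. destruct (Hm Dfin Dfin_cs) as [x [E [[H1 _] Hall]]].
  - split; [exact perm_sub_D|]. exists E0; split; [exact E0_D|exact E0_not_perm].
  - destruct (H1 x) as [n Hn]. specialize (Hn n (Hall n I)). lia.
Qed.

Theorem mainTheorem8 :
  coarse_structure perm_coarse /\
  extremely_normal perm_coarse /\
  (forall A : nat -> Prop, infinite_set A -> large perm_coarse A) /\
  strictly_contained perm_coarse M_omega /\
  ~ maximal perm_coarse.
Proof.
  split; [exact perm_cs|]. split; [exact perm_en|]. split; [exact infinite_large|].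
  split; [|exact not_max].
  split; [exact perm_sub_M|]. exists E0; split; [exact E0_M|exact E0_not_perm].
Qed.
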